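(* For every constant specification $\mathsf{CS}$ for $\mathsf{LPC}^+$ there exist formulas $\phi,\psi,\chi$ such that $\models_{\mathsf{LPC}^+_{\mathsf{CS}}}\phi\equiv\psi$ but $\not\models_{\mathsf{LPC}^+_{\mathsf{CS}}}(\phi>\chi)\equiv(\psi>\chi)$. (Indeed one may take $\phi=p$, $\psi=p\wedge p$, $\chi=q$ for distinct atoms $p,q$.)
   Context: Language: countable sets $\mathsf{Const}$, $\mathsf{Var}$, $\mathsf{Prop}$; terms $t ::= c \mid x \mid t\cdot t \mid t+t \mid\ !t$; formulas $\phi ::= p \mid \neg\phi \mid \phi\wedge\phi \mid \phi\supset\phi \mid \phi>\phi \mid t{:}\phi$; $\mathsf{Tm},\mathsf{Fm}$ the sets of terms and formulas; $\phi\equiv\psi:=(\phi\supset\psi)\wedge(\psi\supset\phi)$. A constant specification $\mathsf{CS}$ is a set of formulas $c{:}\phi$ with $c\in\mathsf{Const}$ and $\phi$ an instance of the axiom schemes (A1) classical tautologies, (A2) $(\phi>(\psi\supset\chi))\supset((\phi>\psi)\supset(\phi>\chi))$, (A3) $\phi>\phi$, (A4) $(\phi>\psi)\supset(\phi\supset\psi)$, (A5) $(s{:}(\phi>\psi)\wedge t{:}\phi) > (s\cdot t){:}\psi$, (A6) $s{:}\phi > (s+t){:}\phi$, (A7) $t{:}\phi>(s+t){:}\phi$, (A8) $t{:}\phi>\phi$, (A9) $t{:}\phi > (!t){:}t{:}\phi$. A relational model is $\mathcal M=(W,W_N,R_{Fm},R_{Tm},V)$: $W$ a nonempty set, $W_N\subseteq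 W$ nonempty (normal states); $R_{Fm}$ assigns to each $\phi\in\mathsf{Fm}$ a relation $R_\phi\subseteq W_N\times W_N$; $R_{Tm}$ assigns to each $t\in\mathsf{Tm}$ a relation $R_t\subseteq W\times W$; $V$ assigns to each normal state $w$ a set $V(w)\subseteq\mathsf{Prop}$ and to each $w\in W\setminus W_N$ a set $V(w)\subseteq\mathsf{Fm}$. $R_\phi(w)$, $R_t(w)$ denote the sets of successors. Truth: at $w\in W\setminus W_N$, $\mathcal M,w\models\phi$ iff $\phi\in V(w)$; at $w\in W_N$: $p$ iff $p\in V(w)$; $\neg,\wedge,\supset$ classically; $\phi>\psi$ iff $R_\phi(w)\subseteq[\psi]$; $t{:}\phi$ iff $R_t(w)\subseteq[\phi]$, where $[\phi]=\{w\in W:\mathcal M,w\models\phi\}$. $\mathcal M$ is an $\mathsf{LPC}^+_{\mathsf{CS}}$-model if for all $w\in W_N$: (1) $R_\phi(w)\subseteq[\phi]$ for all $\phi$; (2) if $w\in[\phi]$ then $w\in R_\phi(w)$; (3) $R_c(w)\subseteq[\phi]$ for each $c{:}\phi\in\mathsf{CS}$; (4) $R_{s+t}(w)\subseteq R_s(w)\cap R_t(w)$; (5) for all $v\in R_{s\cdot t}(w)$ and all $\phi,\psi$: if $w\in[s{:}(\phi>\psi)\wedge t{:}\phi]$ then $v\in[\psi]$; (6) $wR_tw$ for all $t$; (7) for all $t$ and $v,u\in W$, if $wR_{!t}v$ and $vR_tu$ then $wR_tu$. $\models_{\mathsf{LPC}^+_{\mathsf{CS}}}\phi$ means $\phi$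 is true at every normal state of every $\mathsf{LPC}^+_{\mathsf{CS}}$-model. *)

(* Defs.v *)
(* Language of LPC^+: Const, Var, Prop are taken to be nat (countable sets). *)

Inductive Tm : Type :=
| TConst : nat -> Tm
| TVar   : nat -> Tm
| TApp   : Tm -> Tm -> Tm
| TSum   : Tm -> Tm -> Tm
| TBang  : Tm -> Tm.

Inductive Fm : Type :=
| FAtom : nat -> Fm
| FNeg  : Fm -> Fm
| FAnd  : Fm -> Fm -> Fm
| FImp  : Fm -> Fm -> Fm
| FCond : Fm -> Fm -> Fm       (* phi > psi *)
| FJust : Tm -> Fm -> Fm.

Definition FEquiv (phi psi : Fm) : Fm := FAnd (FImp phi psi) (FImp psi phi).

(* (A1) instances of classical tautologies: formulas true under every Boolean
   valuation that treats atoms, conditionals and justification formulas as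
   propositional letters. *)
Fixpoint beval (v : Fm -> bool) (phi : Fm) : bool :=
  match phi with
  | FAtom _ => v phi
  | FNeg a => negb (beval v a)
  | FAnd a b => andb (beval v a) (beval v b)
  | FImp a b => orb (negb (beval v a)) (beval v b)
  | FCond _ _ => v phi
  | FJust _ _ => v phi
  end.

Definition tautology_instance (phi : Fm) : Prop := forall v, beval v phi = true.

Definition axiom_instance (phi : Fm) : Prop :=
  tautology_instance phi
  \/ (exists a b c, phi = FImp (FCond a (FImp b c)) (FImp (FCond a b) (FCond a c)))
  \/ (exists a, phi = FCond a a)
  \/ (exists a b, phi = FImp (FCond a b) (FImp a b))
  \/ (exists s t a b, phi = FCond (FAnd (FJust s (FCond a b)) (FJust t a))
                                  (FJust (TApp s t) b))
  \/ (exists s t a, phi = FCond (FJust s a) (FJust (TSum s t) a))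
  \/ (exists s t a, phi = FCond (FJust t a) (FJust (TSum s t) a))
  \/ (exists t a, phi = FCond (FJust t a) a)
  \/ (exists t a, phi = FCond (FJust t a) (FJust (TBang t) (FJust t a))).

Definition is_CS (CS : Fm -> Prop) : Prop :=
  forall chi, CS chi -> exists c phi, chi = FJust (TConst c) phi /\ axiom_instance phi.

(* Relational models. V is split into VN (valuation of atoms at normal states)
   and VA (sets of formulas at non-normal states). *)
Record model : Type := Model {
  W  : Type;
  WN : W -> Prop;
  RF : Fm -> W -> W -> Prop;
  RT : Tm -> W -> W -> Prop;
  VN : W -> nat -> Prop;
  VA : W -> Fm -> Prop
}.

Fixpoint sat (M : model) (w : W M) (phi : Fm) {struct phi} : Prop :=
  (WN M w ->
     match phi with
     | FAtom p => VN M w p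
     | FNeg a => ~ sat M w a
     | FAnd a b => sat M w a /\ sat M w b
     | FImp a b => sat M w a -> sat M w b
     | FCond a b => forall v, RF M a w v -> sat M v b
     | FJust t a => forall v, RT M t w v -> sat M v a
     end)
  /\ (~ WN M w -> VA M w phi).

Definition is_LPC_model (CS : Fm -> Prop) (M : model) : Prop :=
  (exists w, WN M w)
  /\ (forall phi w v, RF M phi w v -> WN M w /\ WN M v)
  /\ forall w, WN M w ->
     (forall phi v, RF M phi w v -> sat M v phi)
     /\ (forall phi, sat M w phi -> RF M phi w w)                                   (* 2 *)
     /\ (forall c phi v, CS (FJust (TConst c) phi) -> RT M (TConst c) w v -> sat M v phi)
     /\ (forall s t v, RT M (TSum s t) w v -> RT M s w v /\ RT M t w v)
     /\ (forall s t v phi psi, RT M (TApp s t) w v ->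
           sat M w (FAnd (FJust s (FCond phi psi)) (FJust t phi)) -> sat M v psi)
     /\ (forall t, RT M t w w)
     /\ (forall t v u, RT M (TBang t) w v -> RT M t v u -> RT M t w u).

Definition valid (CS : Fm -> Prop) (phi : Fm) : Prop :=
  forall M, is_LPC_model CS M -> forall w, WN M w -> sat M w phi.

(* Main.v *)
Require Import Defs.
From Stdlib Require Import Classical ClassicalEpsilon.

Definition pp := FAnd (FAtom 0) (FAtom 0).
Definition val (n : nat) (w : bool) : Prop := n = 1 -> w = true.

Fixpoint tv (phi : Fm) (w : bool) : Prop :=
  match phi with
  | FAtom n => val n w
  | FNeg a => ~ tv a w
  | FAnd a b => tv a w /\ tv b w
  | FImp a b => tv a w -> tv b w
  | FCond a b => forall v, ((v = w /\ tv a w) \/ (a = pp /\ w = true /\ v = false)) -> tv b v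
  | FJust t a => forall v, v = w -> tv a v
  end.

Definition RFb (a : Fm) (w v : bool) : Prop := (v = w /\ tv a w) \/ (a = pp /\ w = true /\ v = false).

Definition CM : model := Model bool (fun _ => True) RFb (fun _ w v => v = w)
  (fun w n => val n w) (fun _ _ => False).

Lemma sat_tv : forall phi (w : bool), sat CM w phi <-> tv phi w.
Proof.
  induction phi; intro w; simpl.
  - split; [intros [H _]; exact (H I) | intros H; split; [intros _; exact H | intros N; exfalso; exact (N I)]].
  - split; [intros [H _] Ht; apply (H I); apply IHphi; exact Ht
           | intros H; split; [intros _ Hs; apply H, IHphi, Hs | intros N; exfalso; exact (N I)]].
  - split; [intros [H _]; destruct (H I); split; [apply IHphi1 | apply IHphi2]; assumption
           | intros [A B]; split; [intros _; split; [apply IHphi1 | apply IHphi2]; assumption | intros N; exfalso; exact (N I)]].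
  - split; [intros [H _] A; apply IHphi2, (H I), IHphi1, A
           | intros H; split; [intros _ A; apply IHphi2, H, IHphi1, A | intros N; exfalso; exact (N I)]].
  - split; [intros [H _] v R; apply IHphi2, (H I), R
           | intros H; split; [intros _ v R; apply IHphi2, H, R | intros N; exfalso; exact (N I)]].
  - split; [intros [H _] v R; apply IHphi, (H I), R
           | intros H; split; [intros _ v R; apply IHphi, H, R | intros N; exfalso; exact (N I)]].
Qed.

Definition bv (w : bool) (x : Fm) : bool :=
  if excluded_middle_informative (tv x w) then true else false.

Lemma beval_tv : forall phi w, beval (bv w) phi = true <-> tv phi w.
Proof.
  induction phi; intro w; simpl;
  try (unfold bv; destruct (excluded_middle_informative _); simpl; split; intuition; discriminate).
  - rewrite <- IHphi. destruct (beval (bv w) phi); simpl; intuition; discriminate.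
  - rewrite <- IHphi1, <- IHphi2. destruct (beval (bv w) phi1), (beval (bv w) phi2); simpl; intuition; discriminate.
  - rewrite <- IHphi1, <- IHphi2. destruct (beval (bv w) phi1), (beval (bv w) phi2); simpl; intuition; discriminate.
Qed.

Lemma refl_only : forall X Y w, X <> pp -> tv (FCond X Y) w <-> (tv X w -> tv Y w).
Proof.
  intros X Y w Hx; simpl; split.
  - intros H A. apply H. left; auto.
  - intros H v [[-> A] | [E _]]; [auto | contradiction].
Qed.

Lemma ax_tv : forall phi w, axiom_instance phi -> tv phi w.
Proof.
  intros phi w H.
  destruct H as [H|[H|[H|[H|[H|[H|[H|[H|H]]]]]]]].
  - apply beval_tv, H.
  - destruct H as (a & b & c & ->). simpl. intros H1 H2 v R. apply (H1 v R); apply H2, R.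
  - destruct H as (a & ->). simpl. intros v [[-> A]|[-> [-> ->]]]; auto; simpl; unfold val; split; discriminate.
  - destruct H as (a & b & ->). simpl. intros H A. apply H. left; auto.
  - destruct H as (s & t & a & b & ->). apply refl_only; [discriminate|].
    simpl. intros [H1 H2] v ->. apply (H1 w eq_refl). left. split; auto.
  - destruct H as (s & t & a & ->). apply refl_only; [discriminate|]. simpl. intros H v ->. auto.
  - destruct H as (s & t & a & ->). apply refl_only; [discriminate|]. simpl. intros H v ->. auto.
  - destruct H as (t & a & ->). apply refl_only; [discriminate|]. simpl. intros H. auto.
  - destruct H as (t & a & ->). apply refl_only; [discriminate|]. simpl. intros H v -> u ->. auto.
Qed.

Lemma CM_model : forall CS, is_CS CS -> is_LPC_model CS CM.
Proof.
  intros CS HCS. split; [exists true; exact I|]. split; [intros; split; exact I|].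
  intros w _. split; [|split; [|split; [|split; [|split; [|split]]]]].
  - intros phi v R. apply sat_tv. destruct R as [[-> A]|[-> [-> ->]]]; auto.
    simpl. unfold val. split; discriminate.
  - intros phi Hs. left. split; auto. apply sat_tv, Hs.
  - intros c phi v Hc R. simpl in R. subst v. apply sat_tv.
    destruct (HCS _ Hc) as (c' & phi' & E & Ax). injection E as _ ->. apply ax_tv, Ax.
  - intros s t v R. simpl in *. auto.
  - intros s t v phi psi R Hs. simpl in R. subst v. apply sat_tv. apply sat_tv in Hs.
    simpl in Hs. destruct Hs as [H1 H2]. apply (H1 w eq_refl). left; split; auto.
  - intros t. simpl. reflexivity.
  - intros t v u R1 R2. simpl in *. congruence.
Qed.

Theorem mainTheorem6 : forall CS : Fm -> Prop, is_CS CS ->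
  exists phi psi chi : Fm,
    valid CS (FEquiv phi psi) /\ ~ valid CS (FEquiv (FCond phi chi) (FCond psi chi)).
Proof.
  intros CS HCS. exists (FAtom 0), pp, (FAtom 1). split.
  - intros M _ w Hw. simpl. split; [intros _|intros N; contradiction].
    split; (split; [intros _|intros N; contradiction]).
    + intros H. split; [intros _|intros N; contradiction]. split; exact H.
    + intros [H _]. destruct (H Hw) as [A _]. exact A.
  - intros Hv. pose proof (Hv CM (CM_model CS HCS) true I) as H.
    apply sat_tv in H. simpl in H. destruct H as [H _].
    assert (Hq : val 1 false).
    { apply H.
      - intros v [[-> A]|[E _]]; [simpl; unfold val; auto | unfold pp in E; discriminate].
      - right. auto. }
    unfold val in Hq. specialize (Hq eq_refl). discriminate.
Qed.
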